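(* Let $\phi:M_m\to M_n$ be a positive linear map. Then the dual face $L_\phi'$ meets the interior of the cone $\mathbb T$ if and only if both the product vectors in $P_\phi$ and their partial conjugates span the whole space $\mathbb C^n\otimes\mathbb C^m$. If moreover $\phi$ is exposed, then this is the case if and only if $\phi$ is indecomposable.
   Context: $M_k$ is the algebra of $k\times k$ complex matrices, $M_k^+$ its positive semi-definite cone, and $\mathbb V_1=M_n^+\otimes M_m^+\subset M_n\otimes M_m$ the separable cone. Pairing: $\langle y\otimes x,\phi\rangle=\mathrm{Tr}(\phi(x)y^{\mathrm t})$ for $x\in M_m,y\in M_n,\phi:M_m\to M_n$ linear, extended bilinearly. $\mathbb P_1$ is the cone of positive linear maps $M_m\to M_n$. $L_\phi=\{\lambda\phi:\lambda\ge0\}$ and $L_\phi'=\{A\in\mathbb V_1:\langle A,\phi\rangle=0\}$; for a face $G$ of $\mathbb V_1$, $G'=\{\psi\in\mathbb P_1:\langle A,\psi\rangle=0\ \forall A\in G\}$; $\phi$ is exposed if $L_\phi=L_\phi''$. $P_\phi$ is the set of product vectors $\bar y\otimes x\in\mathbb C^n\otimes\mathbb C^m$ ($x\in\mathbb C^m$, $y\in\mathbb C^n$) with $(\phi(xx^* )y\,|\,y)=0$, equivalently $\langle(\bar y\otimes x)(\bar y\otimes x)^*,\phi\rangle=0$; the partial conjugate of $\bar y\otimes x$ is $\bar y\otimes\bar x$. $\mathbb T$ is the cone of positive semi-definite $A\in M_n\otimes M_m$ whose partial transpose $A^\tau$ is also positive semi-definite; its interior (relative to its affine hull) consists of those $A\in\mathbb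 T$ for which both $A$ and $A^\tau$ have full range. A positive map is decomposable if it is a sum of maps $X\mapsto V^*XV$ and $X\mapsto W^*X^{\mathrm t}W$ ($V,W$ $m\times n$ matrices), and indecomposable otherwise. *)

(* Defs.v *)
From HB Require Import structures.
From mathcomp Require Import all_boot all_order all_algebra.
From mathcomp Require Import mxtens.
Set Implicit Arguments. Unset Strict Implicit. Unset Printing Implicit Defensive.
Import Order.TTheory GRing.Theory Num.Theory.
Local Open Scope ring_scope.

Section Defs.
Variable C : numClosedFieldType.

Definition adjmx {p q : nat} (A : 'M[C]_(p, q)) : 'M[C]_(q, p) :=
  (map_mx (fun z : C => z^*) A)^T.

Definition psd {k : nat} (A : 'M[C]_k) : Prop :=
  forall v : 'cV[C]_k, 0 <= (adjmx v *m A *m v) 0 0.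

Definition positive_map {m n : nat} (phi : 'M[C]_m -> 'M[C]_n) : Prop :=
  forall x : 'M[C]_m, psd x -> psd (phi x).

(* M_n (x) M_m is realised as 'M_(n*m), the index (i,j) being
   mxtens_index (i, j); y (x) x is the Kronecker product  y *t x. *)

Definition inV1 {n m : nat} (A : 'M[C]_(n * m)) : Prop :=
  exists (k : nat) (Y : 'I_k -> 'M[C]_n) (X : 'I_k -> 'M[C]_m),
    (forall i, psd (Y i) /\ psd (X i)) /\ A = \sum_(i < k) (Y i *t X i).

(* the pairing <A, phi>, bilinear extension of <y (x) x, phi> = Tr(phi(x) y^t) *)
Definition pairing {n m : nat} (A : 'M[C]_(n * m))
    (phi : 'M[C]_m -> 'M[C]_n) : C :=
  \sum_(i < n) \sum_(k < n) \sum_(j < m) \sum_(l < m)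
     A (mxtens_index (i, j)) (mxtens_index (k, l)) * phi (delta_mx j l) i k.

Definition dual_face {n m : nat} (phi : 'M[C]_m -> 'M[C]_n)
    (A : 'M[C]_(n * m)) : Prop :=
  inV1 A /\ pairing A phi = 0.

(* partial transpose (on the second factor): (y (x) x)^tau = y (x) x^t *)
Definition ptrans {n m : nat} (A : 'M[C]_(n * m)) : 'M[C]_(n * m) :=
  \matrix_(p, q)
    A (mxtens_index ((mxtens_unindex p).1, (mxtens_unindex q).2))
      (mxtens_index ((mxtens_unindex q).1, (mxtens_unindex p).2)).

Definition in_int_T {n m : nat} (A : 'M[C]_(n * m)) : Prop :=
  [/\ psd A, psd (ptrans A), A \in unitmx & ptrans A \in unitmx].

Definition dual_face_meets_int_T {m n : nat}
    (phi : 'M[C]_m -> 'M[C]_n) : Prop :=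
  exists A : 'M[C]_(n * m), dual_face phi A /\ in_int_T A.

Definition prodvec {n m : nat} (y : 'cV[C]_n) (x : 'cV[C]_m) : 'cV[C]_(n * m) :=
  \col_p ((y (mxtens_unindex p).1 0)^* * x (mxtens_unindex p).2 0).
Definition prodvec_pconj {n m : nat} (y : 'cV[C]_n) (x : 'cV[C]_m) : 'cV[C]_(n * m) :=
  \col_p ((y (mxtens_unindex p).1 0)^* * (x (mxtens_unindex p).2 0)^*).

Definition inP {m n : nat} (phi : 'M[C]_m -> 'M[C]_n)
    (y : 'cV[C]_n) (x : 'cV[C]_m) : Prop :=
  (adjmx y *m phi (x *m adjmx x) *m y) 0 0 = 0.

Definition Pvecs {m n : nat} (phi : 'M[C]_m -> 'M[C]_n) (z : 'cV[C]_(n * m)) : Prop :=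
  exists (y : 'cV[C]_n) (x : 'cV[C]_m), inP phi y x /\ z = prodvec y x.
Definition Pvecs_pconj {m n : nat} (phi : 'M[C]_m -> 'M[C]_n) (z : 'cV[C]_(n * m)) : Prop :=
  exists (y : 'cV[C]_n) (x : 'cV[C]_m), inP phi y x /\ z = prodvec_pconj y x.

Definition spans_all {N : nat} (S : 'cV[C]_N -> Prop) : Prop :=
  forall v : 'cV[C]_N, exists (k : nat) (c : 'I_k -> C) (z : 'I_k -> 'cV[C]_N),
    (forall i, S (z i)) /\ v = \sum_(i < k) c i *: z i.

Definition decomposable {m n : nat} (phi : 'M[C]_m -> 'M[C]_n) : Prop :=
  exists (k : nat) (V W : 'I_k -> 'M[C]_(m, n)),
    forall X : 'M[C]_m,
      phi X = \sum_(i < k) (adjmx (V i) *m X *m V i + adjmx (W i) *m X^T *m W i).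

(* exposed: L_phi = L_phi'' as subsets of the cone P_1 of positive maps *)
Definition exposed {m n : nat} (phi : 'M[C]_m -> 'M[C]_n) : Prop :=
  forall psi : {linear 'M[C]_m -> 'M[C]_n}, positive_map psi ->
    ((exists lam : C, 0 <= lam /\ forall X, psi X = lam *: phi X) <->
     (forall A : 'M[C]_(n * m), dual_face phi A -> pairing A psi = 0)).

End Defs.

(* Main.v *)
Require Import Defs.
From HB Require Import structures.
From mathcomp Require Import all_boot all_order all_algebra.
From mathcomp Require Import mxtens.
From mathcomp Require Import zify ring.
From Stdlib Require Classical_Prop.
Import Order.TTheory GRing.Theory Num.Theory.
Local Open Scope ring_scope.
Set Implicit Arguments. Unset Strict Implicit. Unset Printing Implicit Defensive.
Section S.
Variable C : numClosedFieldType.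

Definition ip {N} (w v : 'cV[C]_N) : C := \sum_k (w k 0)^* * v k 0.
Definition qf {N} (A : 'M[C]_N) (v : 'cV[C]_N) : C := (adjmx v *m A *m v) 0 0.
Definition rk1 {N} (w : 'cV[C]_N) : 'M[C]_N := w *m adjmx w.

Lemma adjmxE p q (A : 'M[C]_(p,q)) i j : adjmx A i j = (A j i)^*.
Proof. by rewrite /adjmx !mxE. Qed.

Lemma adjmx_mul p q r (A : 'M[C]_(p,q)) (B : 'M[C]_(q,r)) :
  adjmx (A *m B) = adjmx B *m adjmx A.
Proof. by rewrite /adjmx map_mxM trmx_mul. Qed.

Lemma adjmxK p q (A : 'M[C]_(p,q)) : adjmx (adjmx A) = A.
Proof. by apply/matrixP=> i j; rewrite !adjmxE conjCK. Qed.

Lemma adjmxD p q (A B : 'M[C]_(p,q)) : adjmx (A + B) = adjmx A + adjmx B.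
Proof. by apply/matrixP=> i j; rewrite /adjmx !mxE rmorphD. Qed.

Lemma adjmxZ p q c (A : 'M[C]_(p,q)) : adjmx (c *: A) = c^* *: adjmx A.
Proof. by apply/matrixP=> i j; rewrite /adjmx !mxE rmorphM. Qed.

Lemma ipE N (w v : 'cV[C]_N) : (adjmx w *m v) 0 0 = ip w v.
Proof. by rewrite mxE; apply: eq_bigr => k _; rewrite adjmxE. Qed.

Lemma ipC N (w v : 'cV[C]_N) : ip v w = (ip w v)^*.
Proof.
rewrite /ip rmorph_sum; apply: eq_bigr => k _.
by rewrite rmorphM /= conjCK mulrC.
Qed.

Lemma ip_ge0 N (w : 'cV[C]_N) : 0 <= ip w w.
Proof. by apply: sumr_ge0 => k _; rewrite mulrC mul_conjC_ge0. Qed.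

Lemma ip_eq0 N (w : 'cV[C]_N) : ip w w = 0 -> w = 0.
Proof.
move=> h; apply/matrixP => k j; rewrite ord1 mxE.
have H0 : forall i, xpredT i -> 0 <= (w i 0)^* * w i 0.
  by move=> i _; rewrite mulrC mul_conjC_ge0.
have /eqP := psumr_eq0P H0 h (isT : xpredT k).
by rewrite mulrC mul_conjC_eq0 => /eqP.
Qed.

Lemma qfE N (A : 'M[C]_N) v :
  qf A v = \sum_k \sum_l (v k 0)^* * A k l * v l 0.
Proof.
rewrite /qf mxE (exchange_big) /=; apply: eq_bigr => l _.
rewrite mxE big_distrl /=; apply: eq_bigr => k _.
by rewrite adjmxE.
Qed.

Lemma rk1E N (w : 'cV[C]_N) i j : rk1 w i j = w i 0 * (w j 0)^*.
Proof. by rewrite /rk1 mxE big_ord1 adjmxE. Qed.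

Lemma qfD N (A B : 'M[C]_N) v : qf (A + B) v = qf A v + qf B v.
Proof. by rewrite /qf mulmxDr mulmxDl mxE. Qed.

Lemma qf0 N (v : 'cV[C]_N) : qf 0 v = 0.
Proof. by rewrite /qf mulmx0 mul0mx mxE. Qed.

Lemma rk1_mul N (w v : 'cV[C]_N) : rk1 w *m v = ip w v *: w.
Proof.
rewrite /rk1 -mulmxA [adjmx w *m v]mx11_scalar ipE.
by rewrite -scalemx1 -scalemxAr mulmx1.
Qed.

Lemma qf_rk1 N (w v : 'cV[C]_N) : qf (rk1 w) v = (ip w v)^* * ip w v.
Proof.
rewrite /qf -mulmxA rk1_mul -scalemxAr mxE ipE -ipC mulrC.
by [].
Qed.

Lemma qf_rk1_ge0 N (w v : 'cV[C]_N) : 0 <= qf (rk1 w) v.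
Proof. by rewrite qf_rk1 mulrC mul_conjC_ge0. Qed.

Lemma qf_rk1_eq0 N (w v : 'cV[C]_N) : qf (rk1 w) v = 0 -> ip w v = 0.
Proof. by rewrite qf_rk1 mulrC => /eqP; rewrite mul_conjC_eq0 => /eqP. Qed.


Section Gram.
Variable N : nat.
Implicit Types (A B : 'M[C]_N) (v w u z : 'cV[C]_N).

Inductive gram (S : 'cV[C]_N -> Prop) : 'M[C]_N -> Prop :=
 | gram0 : gram S 0
 | gramS A w : S w -> gram S A -> gram S (A + rk1 w).

Inductive inspan (S : 'cV[C]_N -> Prop) : 'cV[C]_N -> Prop :=
 | span0 : inspan S 0
 | spanS v c w : S w -> inspan S v -> inspan S (v + c *: w).

Lemma gram_add S A B : gram S A -> gram S B -> gram S (A + B).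
Proof.
move=> hA; elim=> [|B' w Sw _ IH]; first by rewrite addr0.
by rewrite addrA; apply: gramS.
Qed.

Lemma gram_psd S A : gram S A -> forall v, 0 <= qf A v.
Proof.
elim=> [|A' w _ _ IH] v; first by rewrite qf0.
by rewrite qfD addr_ge0 // qf_rk1_ge0.
Qed.

Lemma gram_ker S A : gram S A -> forall v, qf A v = 0 -> A *m v = 0.
Proof.
elim=> [|A' w _ hA IH] v; first by rewrite mul0mx.
have h0 := gram_psd hA v.
rewrite qfD => /eqP; rewrite paddr_eq0 ?qf_rk1_ge0 //.
case/andP=> /eqP h1 /eqP /qf_rk1_eq0 h2.
by rewrite mulmxDl (IH _ h1) rk1_mul h2 scale0r addr0.
Qed.

Lemma qf_ker A v : A *m v = 0 -> qf A v = 0.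
Proof. by rewrite /qf -mulmxA => ->; rewrite mulmx0 mxE. Qed.

Lemma gram_kerS S A w v : gram S A -> (A + rk1 w) *m v = 0 ->
  A *m v = 0 /\ ip w v = 0.
Proof.
move=> hA /qf_ker; have h0 := gram_psd hA v; rewrite qfD => /eqP.
rewrite paddr_eq0 ?qf_rk1_ge0 //.
by case/andP=> /eqP h1 /eqP /qf_rk1_eq0 h2; split; [exact: gram_ker hA _ h1 | exact: h2].
Qed.

Lemma inspan_add S v u : inspan S v -> inspan S u -> inspan S (v + u).
Proof.
move=> hv; elim=> [|u' c w Sw _ IH]; first by rewrite addr0.
by rewrite addrA; apply: spanS.
Qed.

Lemma inspan_scale S v c : inspan S v -> inspan S (c *: v).
Proof.
elim=> [|v' c' w Sw _ IH]; first by rewrite scaler0; apply: span0.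
by rewrite scalerDr scalerA; apply: spanS.
Qed.

Lemma inspan_gen S w c : S w -> inspan S (c *: w).
Proof. by move=> Sw; rewrite -[_ *: _]add0r; apply: spanS => //; apply: span0. Qed.

Lemma gram_span S A : gram S A -> forall u, inspan S (A *m u).
Proof.
elim=> [|A' w Sw _ IH] u; first by rewrite mul0mx; apply: span0.
by rewrite mulmxDl rk1_mul; apply: spanS.
Qed.

Lemma ip_add z v u : ip (v + u) z = ip v z + ip u z.
Proof.
rewrite /ip -big_split /=; apply: eq_bigr => k _.
by rewrite mxE rmorphD mulrDl.
Qed.

Lemma ip_scale z v c : ip (c *: v) z = c^* * ip v z.
Proof.
rewrite /ip mulr_sumr; apply: eq_bigr => k _.
by rewrite mxE rmorphM mulrA.
Qed.

Lemma ip0 z : ip 0 z = 0.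
Proof. by rewrite /ip big1 // => k _; rewrite mxE rmorph0 mul0r. Qed.

Lemma inspan_orth S z v : (forall w, S w -> ip w z = 0) -> inspan S v -> ip v z = 0.
Proof.
move=> h; elim=> [|v' c w Sw _ IH]; first by rewrite ip0.
by rewrite ip_add ip_scale IH h // mulr0 addr0.
Qed.

Lemma spans_inspan S : spans_all S -> forall v, inspan S v.
Proof.
move=> h v; have [k [c [z [Sz ->]]]] := h v.
apply: (big_ind (inspan S)); first exact: span0.
  by move=> x y; apply: inspan_add.
by move=> i _; apply: inspan_gen.
Qed.

Lemma inspan_spans S : (forall v, inspan S v) -> spans_all S.
Proof.
move=> h v; elim: (h v) => [|v' c w Sw _ [k [c' [z [Sz ->]]]]].
  by exists 0%N, (fun _ => 0), (fun _ => 0); split => [[]//|]; rewrite big_ord0.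
exists k.+1, (fun i => if unlift ord0 i is Some j then c' j else c).
exists (fun i => if unlift ord0 i is Some j then z j else w); split.
  by move=> i; case: unlift.
rewrite big_ord_recl /= unlift_none addrC; congr (_ + _).
by apply: eq_bigr => i _; rewrite liftK.
Qed.

End Gram.

Section Rank.
Variable N : nat.
Implicit Types (A B : 'M[C]_N) (v : 'cV[C]_N).

Lemma unit_ker A v : A \in unitmx -> A *m v = 0 -> v = 0.
Proof. by move=> hA h; rewrite -(mulKmx hA v) h mulmx0. Qed.

Lemma trmx_ker A v : (v^T *m A^T == 0) = (A *m v == 0).
Proof.
apply/eqP/eqP => h; last by rewrite -trmx_mul h trmx0.
by move/(congr1 trmx): h; rewrite trmx_mul !trmxK trmx0.
Qed.

Lemma ker_sub A B : (forall v, B *m v = 0 -> A *m v = 0) ->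
  (kermx B^T <= kermx A^T)%MS.
Proof.
move=> h; apply/sub_kermxP/row_matrixP => i; rewrite row_mul row0.
set r := row i _.
have hr : r *m B^T = 0 by rewrite /r -row_mul mulmx_ker row0.
have : B *m r^T = 0 by apply/eqP; rewrite -trmx_ker trmxK hr.
move/h/eqP; rewrite -trmx_ker trmxK => /eqP //.
Qed.

Lemma ker_unit A : (forall v, A *m v = 0 -> v = 0) -> A \in unitmx.
Proof.
move=> h; rewrite -unitmx_tr -row_free_unit -kermx_eq0; apply/eqP/row_matrixP => i.
rewrite row0; set r := row i _.
have hr : r *m A^T = 0 by rewrite /r -row_mul mulmx_ker row0.
have : A *m r^T = 0 by apply/eqP; rewrite -trmx_ker trmxK hr.
by move/h => /(congr1 trmx); rewrite trmxK trmx0.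
Qed.

Lemma ker_rank A B : (forall v, B *m v = 0 -> A *m v = 0) -> (\rank A <= \rank B)%N.
Proof.
move=> /ker_sub /mxrankS; rewrite !mxrank_ker !mxrank_tr.
have := rank_leq_row A; have := rank_leq_row B; lia.
Qed.

Lemma ker_rank_eq A B : (forall v, B *m v = 0 -> A *m v = 0) -> \rank A = \rank B ->
  forall v, A *m v = 0 -> B *m v = 0.
Proof.
move=> h1 hr; have hs := ker_sub h1.
have := (mxrank_leqif_sup hs).2; rewrite !mxrank_ker !mxrank_tr hr eqxx => /esym hs'.
move=> v /eqP; rewrite -trmx_ker -sub_kermx => hv.
by apply/eqP; rewrite -trmx_ker -sub_kermx (submx_trans hv hs').
Qed.

End Rank.

Section Tens.
Variables n m : nat.
Implicit Types (A B : 'M[C]_(n * m)) (y : 'cV[C]_n) (x : 'cV[C]_m).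

Lemma mxtens_ind2 (P : 'I_(n * m) -> Prop) :
  (forall i j, P (mxtens_index (i, j))) -> forall p, P p.
Proof. by move=> h p; rewrite -(mxtens_unindexK p); case: (mxtens_unindex p). Qed.

Definition cvec p (y : 'cV[C]_p) : 'cV[C]_p := map_mx (fun z => z^*) y.

Lemma prodvecE y x i j : prodvec y x (mxtens_index (i, j)) 0 = (y i 0)^* * x j 0.
Proof. by rewrite /prodvec mxE mxtens_indexK. Qed.

Lemma pconjE y x i j :
  prodvec_pconj y x (mxtens_index (i, j)) 0 = (y i 0)^* * (x j 0)^*.
Proof. by rewrite /prodvec_pconj mxE mxtens_indexK. Qed.

Lemma ptransE A i j k l :
  ptrans A (mxtens_index (i, j)) (mxtens_index (k, l)) =
  A (mxtens_index (i, l)) (mxtens_index (k, j)).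
Proof. by rewrite /ptrans mxE !mxtens_indexK. Qed.

Lemma ptransD A B : ptrans (A + B) = ptrans A + ptrans B.
Proof. by apply/matrixP => p q; rewrite !mxE. Qed.

Lemma ptrans0 : ptrans (0 : 'M[C]_(n * m)) = 0.
Proof. by apply/matrixP => p q; rewrite !mxE. Qed.

Lemma ptrans_rk1 y x : ptrans (rk1 (prodvec y x)) = rk1 (prodvec_pconj y x).
Proof.
apply/matrixP; apply: mxtens_ind2 => i j; apply: mxtens_ind2 => k l.
rewrite ptransE !rk1E !prodvecE !pconjE !rmorphM /= !conjCK; ring.
Qed.

Lemma rk1_tens y x : rk1 (prodvec y x) = rk1 (cvec y) *t rk1 x.
Proof.
apply/matrixP; apply: mxtens_ind2 => i j; apply: mxtens_ind2 => k l.
rewrite tensmxE !rk1E !prodvecE /cvec !mxE !rmorphM /= !conjCK; ring.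
Qed.

Lemma pairingD A B (psi : 'M[C]_m -> 'M[C]_n) :
  pairing (A + B) psi = pairing A psi + pairing B psi.
Proof.
rewrite /pairing -big_split; apply: eq_bigr => i _.
rewrite -big_split; apply: eq_bigr => k _.
rewrite -big_split; apply: eq_bigr => j _.
rewrite -big_split; apply: eq_bigr => l _.
by rewrite mxE mulrDl.
Qed.

Lemma pairing0 (psi : 'M[C]_m -> 'M[C]_n) : pairing 0 psi = 0.
Proof.
rewrite /pairing big1 // => i _; rewrite big1 // => k _; rewrite big1 // => j _.
by rewrite big1 // => l _; rewrite mxE mul0r.
Qed.

Lemma pairing_rk1 (psi : {linear 'M[C]_m -> 'M[C]_n}) y x :
  pairing (rk1 (prodvec y x)) psi = qf (psi (rk1 x)) y.
Proof.
rewrite qfE /pairing; apply: eq_bigr => i _; apply: eq_bigr => k _.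
rewrite [X in psi X](matrix_sum_delta (rk1 x)) linear_sum summxE big_distrr big_distrl.
apply: eq_bigr => j _ /=.
rewrite linear_sum summxE big_distrr big_distrl; apply: eq_bigr => l _ /=.
rewrite [rk1 (prodvec _ _) _ _]rk1E !prodvecE linearZ /= mxE rk1E !rmorphM /= !conjCK; ring.
Qed.

End Tens.

Section Cone.
Variables n m : nat.
Implicit Types (A B : 'M[C]_(n * m)) (y : 'cV[C]_n) (x : 'cV[C]_m).

Inductive cone (Q : 'cV[C]_n -> 'cV[C]_m -> Prop) : 'M[C]_(n * m) -> Prop :=
 | cone0 : cone Q 0
 | coneS A y x : Q y x -> cone Q A -> cone Q (A + rk1 (prodvec y x)).

Lemma cone_add Q A B : cone Q A -> cone Q B -> cone Q (A + B).
Proof.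
move=> hA; elim=> [|B' y x Qyx _ IH]; first by rewrite addr0.
by rewrite addrA; apply: coneS.
Qed.

Lemma cone_gram Q A : cone Q A ->
  gram (fun w => exists y x, Q y x /\ w = prodvec y x) A.
Proof.
elim=> [|A' y x Q' _ IH]; first exact: gram0.
by apply: gramS => //; exists y, x.
Qed.

Lemma cone_gram_pt Q A : cone Q A ->
  gram (fun w => exists y x, Q y x /\ w = prodvec_pconj y x) (ptrans A).
Proof.
elim=> [|A' y x Q' _ IH]; first by rewrite ptrans0; exact: gram0.
by rewrite ptransD ptrans_rk1; apply: gramS => //; exists y, x.
Qed.

Lemma psd_rk1 N (w : 'cV[C]_N) : psd (rk1 w).
Proof. by move=> v; apply: qf_rk1_ge0. Qed.

Lemma cone_V1 Q A : cone Q A -> inV1 A.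
Proof.
elim=> [|A' y x _ _ [k [Y [X [hYX ->]]]]].
  by exists 0%N, (fun _ => 0), (fun _ => 0); split => [[]//|]; rewrite big_ord0.
exists k.+1, (fun i => if unlift ord0 i is Some j then Y j else rk1 (cvec y)).
exists (fun i => if unlift ord0 i is Some j then X j else rk1 x); split.
  by move=> i; case: unlift => [j|]; [exact: hYX | split; apply: psd_rk1].
rewrite big_ord_recl /= unlift_none addrC rk1_tens; congr (_ + _).
by apply: eq_bigr => i _; rewrite liftK.
Qed.

Lemma cone_pairing_ge0 Q A (phi : {linear 'M[C]_m -> 'M[C]_n}) :
  positive_map phi -> cone Q A -> 0 <= pairing A phi.
Proof.
move=> hpos; elim=> [|A' y x _ _ IH]; first by rewrite pairing0.
by rewrite pairingD pairing_rk1 addr_ge0 //; apply: (hpos _ (psd_rk1 x)).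
Qed.

Lemma cone_zero A (phi : {linear 'M[C]_m -> 'M[C]_n}) :
  positive_map phi -> cone (fun _ _ => True) A -> pairing A phi = 0 ->
  cone (inP phi) A.
Proof.
move=> hpos; elim=> [|A' y x _ hA IH]; first by move=> _; exact: cone0.
have h0 := cone_pairing_ge0 hpos hA.
have h1 : 0 <= qf (phi (rk1 x)) y by apply: (hpos _ (psd_rk1 x)).
rewrite pairingD pairing_rk1 => /eqP; rewrite paddr_eq0 // => /andP[/eqP h2 /eqP h3].
by apply: coneS; [exact: h3 | exact: IH].
Qed.

Lemma cone_pairing0 Q A (psi : {linear 'M[C]_m -> 'M[C]_n}) :
  (forall y x, Q y x -> qf (psi (rk1 x)) y = 0) -> cone Q A -> pairing A psi = 0.
Proof.
move=> h; elim=> [|A' y x Qyx _ IH]; first by rewrite pairing0.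
by rewrite pairingD pairing_rk1 IH h // addr0.
Qed.

End Cone.

Section Herm.
Variable N : nat.
Implicit Types (A B : 'M[C]_N) (u v : 'cV[C]_N).

Definition bf A u v : C := (adjmx u *m A *m v) 0 0.

Lemma qf_add A u v : qf A (u + v) = qf A u + bf A u v + bf A v u + qf A v.
Proof.
rewrite /qf /bf adjmxD !mulmxDl !mulmxDr !mxE.
by rewrite !addrA; congr (_ + _); rewrite -!addrA; congr (_ + _); rewrite addrC.
Qed.

Lemma bf_scale A u v a b : bf A (a *: u) (b *: v) = a^* * b * bf A u v.
Proof.
rewrite /bf adjmxZ -!scalemxAl -scalemxAr !mxE; ring.
Qed.

Lemma qf_scale A u a : qf A (a *: u) = a^* * a * qf A u.
Proof. exact: bf_scale. Qed.

Lemma adj_delta (i : 'I_N) : adjmx (delta_mx i 0 : 'cV[C]_N) = delta_mx 0 i.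
Proof.
apply/matrixP => p q; rewrite adjmxE !mxE.
by case: (q == i); case: (p == 0); rewrite /= ?conjC0 ?conjC1.
Qed.

Lemma delta_entry A (i j : 'I_N) : ((delta_mx 0 i : 'rV[C]_N) *m A *m (delta_mx j 0 : 'cV[C]_N)) 0 0 = A i j.
Proof. by rewrite -rowE -colE !mxE. Qed.

Lemma bf_delta A i j : bf A (delta_mx i 0) (delta_mx j 0 : 'cV[C]_N) = A i j.
Proof. by rewrite /bf adj_delta delta_entry. Qed.

Lemma real_conj (z : C) : 0 <= z -> z^* = z.
Proof. by move=> h; apply: conj_Creal; apply: ger0_real. Qed.

Lemma qf_pair A (i j : 'I_N) a b :
  qf A (a *: (delta_mx i 0 : 'cV[C]_N) + b *: delta_mx j 0) =
  a^* * a * A i i + a^* * b * A i j + b^* * a * A j i + b^* * b * A j j.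
Proof.
rewrite qf_add (bf_scale A (delta_mx i 0)) (bf_scale A (delta_mx j 0)).
rewrite (qf_scale A (delta_mx i 0)) (qf_scale A (delta_mx j 0)).
by rewrite !bf_delta /qf -/(bf A (delta_mx i 0) _) -/(bf A (delta_mx j 0) _) !bf_delta.
Qed.

Lemma psd_herm A : psd A -> forall i j, (A j i)^* = A i j.
Proof.
move=> h i j.
pose ei : 'cV[C]_N := delta_mx i 0; pose ej : 'cV[C]_N := delta_mx j 0.
have q1 := real_conj (h (1 *: ei + 1 *: ej)).
have q2 := real_conj (h (1 *: ei + 'i *: ej)).
have q3 := real_conj (h (1 *: ei + 0 *: ej)).
have q4 := real_conj (h (0 *: ei + 1 *: ej)).
move: q1 q2 q3 q4; rewrite -!/(qf A _) /ei /ej !qf_pair.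
rewrite !rmorphD !rmorphM /= !conjCK !conjCi !rmorph1 !rmorph0.
set a := A i j; set b := A j i; set aii := A i i; set ajj := A j j.
rewrite !(mul1r, mul0r, mulr0, addr0, add0r, mulr1) => e1 e2 e3 e4.
rewrite e3 e4 in e1 e2.
have f : a^* + b^* - a - b = (aii + a^* + b^* + ajj) - (aii + a + b + ajj) by ring.
rewrite e1 subrr in f.
have g : 'i * (b^* - a^* - a + b) = (aii + - 'i * a^* + 'i * b^* + 'i * - 'i * ajj) -
    (aii + 'i * a + - 'i * b + - 'i * 'i * ajj) by ring.
rewrite e2 subrr in g.
move/eqP: g; rewrite mulf_eq0 (negbTE (@neq0Ci C)) /= => /eqP g.
have : (b^* - a) * 2 = (a^* + b^* - a - b) + (b^* - a^* - a + b) by ring.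
rewrite f g addr0 => /eqP; rewrite mulf_eq0 pnatr_eq0 orbF subr_eq0 => /eqP //.
Qed.
Lemma adjmx_tc p q (M : 'M[C]_(p, q)) : adjmx (map_mx (@Num.conj C) M^T) = M.
Proof. by apply/matrixP => i j; rewrite adjmxE !mxE conjCK. Qed.

Lemma adjmx_map p q (M : 'M[C]_(p, q)) : adjmx M = map_mx (@Num.conj C) M^T.
Proof. by apply/matrixP => i j; rewrite adjmxE !mxE. Qed.

Lemma psd_factor A : psd A -> exists B : 'M[C]_N, A = adjmx B *m B.
Proof.
move=> h.
have hA : map_mx (@Num.conj C) A^T = A by apply/matrixP => i j; rewrite !mxE psd_herm.
have /orthomx_spectralP : A \is normalmx by apply/normalmxP; rewrite hA.
have hP := spectral_unitarymx A.
set P := spectralmx A in hP *; set d := spectral_diag A => eA.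
rewrite invmx_unitary // in eA.
have PPt : P *m map_mx Num.conj P^T = 1%:M by apply/unitarymxP.
have dge0 : forall i, 0 <= d 0 i.
  move=> i; have := h (map_mx Num.conj P^T *m delta_mx i 0).
  rewrite adjmx_mul adjmx_tc adj_delta [in X in _ <= X]eA !mulmxA.
by rewrite -(mulmxA _ P) PPt mulmx1 -(mulmxA _ P) PPt mulmx1 delta_entry mxE eqxx mulr1n.
exists (diag_mx (map_mx sqrtC d) *m P).
rewrite adjmx_mul adjmx_map -mulmxA [_ *m (_ *m P)]mulmxA.
have -> : adjmx (diag_mx (map_mx sqrtC d)) *m diag_mx (map_mx sqrtC d) = diag_mx d.
  apply/matrixP => i j; rewrite mul_mx_diag mxE adjmxE !mxE.
  case: (eqVneq j i) => [->|nij]; last by rewrite !mulr0n rmorph0 mul0r.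
  rewrite !mulr1n real_conj ?sqrtC_ge0 // -expr2 sqrtCK //.
by rewrite mulmxA.
Qed.

End Herm.

Section V1.
Variables n m : nat.

Lemma cone_sum Q I (r : seq I) (F : I -> 'M[C]_(n * m)) :
  (forall i, cone Q (F i)) -> cone Q (\sum_(i <- r) F i).
Proof.
move=> h; apply: (big_ind (cone Q)); [exact: cone0 | by move=> ? ?; apply: cone_add | by []].
Qed.

Lemma tens_cone (Y : 'M[C]_n) (X : 'M[C]_m) :
  psd Y -> psd X -> cone (fun _ _ => True) (Y *t X).
Proof.
move=> /psd_factor [B ->] /psd_factor [D ->].
pose yv (r : 'I_n) : 'cV[C]_n := \col_i B r i.
pose xv (s : 'I_m) : 'cV[C]_m := \col_j (D s j)^*.
have -> : (adjmx B *m B) *t (adjmx D *m D) =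
    \sum_r \sum_s rk1 (prodvec (yv r) (xv s)).
  apply/matrixP; apply: mxtens_ind2 => i j; apply: mxtens_ind2 => k l.
  rewrite tensmxE !mxE summxE mulr_suml; apply: eq_bigr => r _.
  rewrite summxE mulr_sumr; apply: eq_bigr => s _.
  rewrite rk1E !prodvecE !mxE !rmorphM /= !conjCK; ring.
apply: cone_sum => r; apply: cone_sum => s.
by rewrite -[rk1 _]add0r; apply: coneS => //; exact: cone0.
Qed.

Lemma V1_cone (A : 'M[C]_(n * m)) : inV1 A -> cone (fun _ _ => True) A.
Proof.
case=> k [Y [X [hYX ->]]]; apply: cone_sum => i.
by case: (hYX i) => h1 h2; apply: tens_cone.
Qed.

End V1.

Lemma nat_max (P : nat -> Prop) b : (exists k, P k) -> (forall k, P k -> (k <= b)%N) ->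
  exists k, P k /\ forall j, P j -> (j <= k)%N.
Proof.
elim: b => [|b IH] [k0 Pk0] hb.
  by exists k0; split => // j /hb; have := hb _ Pk0; lia.
case: (Classical_Prop.classic (P b.+1)) => [Pb|nPb].
  by exists b.+1; split => // j /hb.
apply: IH; first by exists k0.
move=> k Pk; have := hb _ Pk; rewrite leq_eqVlt => /orP[/eqP ek|//].
by case: nPb; rewrite -ek.
Qed.

Lemma sum_tens n m (F : 'I_(n * m) -> C) :
  \sum_p F p = \sum_i \sum_j F (mxtens_index (i, j)).
Proof.
rewrite pair_big /= (reindex (@mxtens_index n m)) /=; last first.
  by exists (@mxtens_unindex n m) => p _; [rewrite mxtens_indexK | rewrite mxtens_unindexK].
by apply: eq_bigr => -[i j].
Qed.

Lemma nat_squeeze (a a' b b' : nat) : (a <= a')%N -> (b <= b')%N -> (a' + b' <= a + b)%N ->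
  a = a' /\ b = b'.
Proof. lia. Qed.

Section Main.
Variables n m : nat.
Variable phi : {linear 'M[C]_m -> 'M[C]_n}.
Hypothesis hpos : positive_map phi.

Lemma max_cone : exists A, cone (inP phi) A /\
  (forall z, A *m z = 0 -> forall w, Pvecs phi w -> ip w z = 0) /\
  (forall z, ptrans A *m z = 0 -> forall w, Pvecs_pconj phi w -> ip w z = 0).
Proof.
pose f (A : 'M[C]_(n * m)) := (\rank A + \rank (ptrans A))%N.
have [|k [[A [cA ->]] hmax]] := @nat_max (fun k => exists A, cone (inP phi) A /\ k = f A)
   (n * m + n * m)%N (ex_intro _ _ (ex_intro _ 0 (conj (cone0 _) erefl))).
  move=> k [A [_ ->]]; rewrite /f; have := rank_leq_row A.
  have := rank_leq_row (ptrans A); lia.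
have key : forall y x, inP phi y x ->
    (forall z, A *m z = 0 -> ip (prodvec y x) z = 0) /\
    (forall z, ptrans A *m z = 0 -> ip (prodvec_pconj y x) z = 0).
  move=> y x hyx.
  have cA' := coneS hyx cA.
  have gA := cone_gram cA; have gT := cone_gram_pt cA.
  have k1 : forall v : 'cV[C]_(n * m), (A + rk1 (prodvec y x)) *m v = 0 -> A *m v = 0.
    by move=> v h; case: (gram_kerS gA h).
  have eT : ptrans (A + rk1 (prodvec y x)) = ptrans A + rk1 (prodvec_pconj y x).
    by rewrite ptransD ptrans_rk1.
  have k2 : forall v : 'cV[C]_(n * m), ptrans (A + rk1 (prodvec y x)) *m v = 0 -> ptrans A *m v = 0.
    by move=> v; rewrite eT => h; case: (gram_kerS gT h).
  have r1 := ker_rank k1; have r2 := ker_rank k2.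
  have hm := hmax _ (ex_intro _ _ (conj cA' erefl)); rewrite /f in hm.
  have [e1 e2] := nat_squeeze r1 r2 hm.
  split => z hz.
    by have := ker_rank_eq k1 e1 hz => h; case: (gram_kerS gA h).
  by have := ker_rank_eq k2 e2 hz; rewrite eT => h; case: (gram_kerS gT h).
exists A; split => //; split.
  by move=> z hz w [y [x [hyx ->]]]; apply: (key _ _ hyx).1.
by move=> z hz w [y [x [hyx ->]]]; apply: (key _ _ hyx).2.
Qed.

Lemma cone_meets A : cone (inP phi) A -> A \in unitmx -> ptrans A \in unitmx ->
  dual_face_meets_int_T phi.
Proof.
move=> cA uA uT; exists A; split; split.
- exact: cone_V1 cA.
- by apply: cone_pairing0 cA => y x.
- exact: gram_psd (cone_gram cA).
- exact: gram_psd (cone_gram_pt cA).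
- exact: uA.
- exact: uT.
Qed.

Lemma meets_cone A : dual_face phi A -> cone (inP phi) A.
Proof. by case=> hV hp; apply: cone_zero hpos (V1_cone hV) hp. Qed.

Lemma part1 : dual_face_meets_int_T phi <->
  spans_all (Pvecs phi) /\ spans_all (Pvecs_pconj phi).
Proof.
split.
  case=> A [hd [_ _ uA uT]]; have cA := meets_cone hd.
  split; apply: inspan_spans => v.
    by rewrite -(mulKVmx uA v); exact: (gram_span (cone_gram cA) _).
  by rewrite -(mulKVmx uT v); exact: (gram_span (cone_gram_pt cA) _).
case=> sP sT; have [A [cA [h1 h2]]] := max_cone.
apply: (cone_meets cA); apply: ker_unit => z hz; apply: ip_eq0.
  by apply: inspan_orth (h1 _ hz) (spans_inspan sP z).
by apply: inspan_orth (h2 _ hz) (spans_inspan sT z).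
Qed.

End Main.

Section Psi.
Variables m n : nat.
Variables V W : 'M[C]_(m, n).
Definition psi (X : 'M[C]_m) : 'M[C]_n := adjmx V *m X *m V + adjmx W *m X^T *m W.
Fact psi_lin : linear psi.
Proof.
move=> a X Y; rewrite /psi !(linearD, linearZ) /= !mulmxDl -!scalemxAl.
by rewrite addrACA.
Qed.
HB.instance Definition _ := GRing.isLinear.Build C 'M[C]_m 'M[C]_n _ psi psi_lin.
End Psi.

Section Part2.
Variables n m : nat.
Implicit Types (A : 'M[C]_(n * m)) (V W : 'M[C]_(m, n)).

Definition vecV (V : 'M[C]_(m, n)) : 'cV[C]_(n * m) :=
  \col_p V (mxtens_unindex p).2 (mxtens_unindex p).1.

Lemma vecVE V i j : vecV V (mxtens_index (i, j)) 0 = V j i.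
Proof. by rewrite /vecV mxE mxtens_indexK. Qed.

Lemma vecV_inj V : vecV V = 0 -> V = 0.
Proof.
move=> h; apply/matrixP => j i.
have := congr1 (fun M : 'cV[C]_(n * m) => M (mxtens_index (i, j)) 0) h.
by rewrite /= vecVE !mxE.
Qed.

Lemma vecV0 : vecV 0 = 0.
Proof. by apply/matrixP => p q; rewrite !mxE. Qed.

Definition matV (z : 'cV[C]_(n * m)) : 'M[C]_(m, n) := \matrix_(j, i) z (mxtens_index (i, j)) 0.

Lemma vecV_matV z : vecV (matV z) = z.
Proof.
apply/matrixP => p q; rewrite ord1 /vecV !mxE.
by rewrite -[in X in X = _]surjective_pairing mxtens_unindexK.
Qed.

Lemma pairing_ext A (f g : 'M[C]_m -> 'M[C]_n) : (forall X, f X = g X) ->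
  pairing A f = pairing A g.
Proof.
move=> h; rewrite /pairing; apply: eq_bigr => i _; apply: eq_bigr => k _.
by apply: eq_bigr => j _; apply: eq_bigr => l _; rewrite h.
Qed.

Lemma pairing_addf A (f g : 'M[C]_m -> 'M[C]_n) :
  pairing A (fun X => f X + g X) = pairing A f + pairing A g.
Proof.
rewrite /pairing -big_split; apply: eq_bigr => i _.
rewrite -big_split; apply: eq_bigr => k _.
rewrite -big_split; apply: eq_bigr => j _.
rewrite -big_split; apply: eq_bigr => l _.
by rewrite mxE mulrDr.
Qed.

Lemma pairing_sumf A k (F : 'I_k -> 'M[C]_m -> 'M[C]_n) :
  pairing A (fun X => \sum_(i < k) F i X) = \sum_(i < k) pairing A (F i).
Proof.
elim: k F => [|k IH] F.
  rewrite big_ord0 (pairing_ext _ (g := fun _ => 0)); last by move=> X; rewrite big_ord0.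
  rewrite /pairing big1 // => i _; rewrite big1 // => k _; rewrite big1 // => j _.
  by rewrite big1 // => l _; rewrite mxE mulr0.
rewrite big_ord_recr /= -IH -pairing_addf.
by apply: pairing_ext => X; rewrite big_ord_recr.
Qed.

Lemma Ad_delta V (j l : 'I_m) (i k : 'I_n) :
  (adjmx V *m delta_mx j l *m V) i k = (V j i)^* * V l k.
Proof.
rewrite -(mul_delta_mx (0 : 'I_1)) mulmxA -colE -mulmxA -rowE mxE big_ord1.
by rewrite !mxE.
Qed.

Lemma pairing_Ad A V : pairing A (fun X => adjmx V *m X *m V) = qf A (vecV V).
Proof.
rewrite qfE sum_tens /pairing; apply: eq_bigr => i _.
rewrite exchange_big /=; apply: eq_bigr => j _.
rewrite sum_tens; apply: eq_bigr => k _; apply: eq_bigr => l _.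
by rewrite Ad_delta !vecVE; ring.
Qed.

Lemma pairing_ptrans A (f : 'M[C]_m -> 'M[C]_n) :
  pairing A (fun X => f X^T) = pairing (ptrans A) f.
Proof.
rewrite /pairing; apply: eq_bigr => i _; apply: eq_bigr => k _.
rewrite exchange_big /=; apply: eq_bigr => l _; apply: eq_bigr => j _.
by rewrite ptransE trmx_delta.
Qed.

Lemma pairing_psi A V W :
  pairing A (psi V W) = qf A (vecV V) + qf (ptrans A) (vecV W).
Proof.
rewrite (pairing_ext _ (g := fun X => adjmx V *m X *m V + adjmx W *m X^T *m W)) //.
rewrite pairing_addf pairing_Ad; congr (_ + _).
by rewrite (pairing_ptrans A (fun X => adjmx W *m X *m W)) pairing_Ad.
Qed.

Lemma qf_Ad p q (V : 'M[C]_(p, q)) X v : qf (adjmx V *m X *m V) v = qf X (V *m v).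
Proof. by rewrite /qf adjmx_mul !mulmxA. Qed.

Lemma qf_tr p (X : 'M[C]_p) u : qf X^T u = qf X (cvec u).
Proof.
rewrite !qfE exchange_big /=; apply: eq_bigr => l _; apply: eq_bigr => k _.
by rewrite !mxE conjCK; ring.
Qed.

Lemma psi_pos V W : positive_map (psi V W).
Proof.
move=> X hX v; rewrite -/(qf _ _) qfD qf_Ad qf_Ad qf_tr.
by apply: addr_ge0; apply: hX.
Qed.

Lemma rk1_tr p (x : 'cV[C]_p) : (rk1 x)^T = rk1 (cvec x).
Proof. by apply/matrixP => i j; rewrite mxE !rk1E !mxE conjCK mulrC. Qed.

Lemma ip_vec V (y : 'cV[C]_n) (x : 'cV[C]_m) :
  ip x (V *m y) = ip (prodvec y x) (vecV V).
Proof.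
rewrite /ip sum_tens exchange_big /=; apply: eq_bigr => j _.
rewrite mxE mulr_sumr; apply: eq_bigr => i _.
by rewrite prodvecE vecVE rmorphM /= conjCK; ring.
Qed.

Lemma ip_vecT W (y : 'cV[C]_n) (x : 'cV[C]_m) :
  ip (cvec x) (W *m y) = ip (prodvec_pconj y x) (vecV W).
Proof.
rewrite /ip sum_tens exchange_big /=; apply: eq_bigr => j _.
rewrite !mxE mulr_sumr; apply: eq_bigr => i _.
by rewrite pconjE vecVE rmorphM /= !conjCK; ring.
Qed.

Lemma psi_rk1 V W (y : 'cV[C]_n) (x : 'cV[C]_m) :
  qf (psi V W (rk1 x)) y =
    (ip (prodvec y x) (vecV V))^* * ip (prodvec y x) (vecV V) +
    (ip (prodvec_pconj y x) (vecV W))^* * ip (prodvec_pconj y x) (vecV W).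
Proof. by rewrite /psi qfD !qf_Ad rk1_tr !qf_rk1 ip_vec ip_vecT. Qed.

Lemma tr_adj V : \tr (adjmx V *m V) = ip (vecV V) (vecV V).
Proof.
rewrite /ip sum_tens /mxtrace; apply: eq_bigr => i _.
rewrite mxE; apply: eq_bigr => j _.
by rewrite vecVE adjmxE.
Qed.

Lemma psi1 V W : psi V W 1%:M = 0 -> V = 0 /\ W = 0.
Proof.
rewrite /psi trmx1 !mulmx1 => /(congr1 (@mxtrace _ _)); rewrite mxtraceD !tr_adj mxtrace0.
move=> /eqP; rewrite paddr_eq0 ?ip_ge0 // => /andP[/eqP h1 /eqP h2].
by split; apply: vecV_inj; apply: ip_eq0.
Qed.

Lemma dec_from (phi : {linear 'M[C]_m -> 'M[C]_n}) V W (lam : C) : 0 < lam ->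
  (forall X, psi V W X = lam *: phi X) -> decomposable phi.
Proof.
move=> hl h; pose s := sqrtC (lam^-1).
have hs : s^* * s = lam^-1.
  by rewrite real_conj ?sqrtC_ge0 ?invr_ge0 ?ltW // -expr2 sqrtCK.
exists 1%N, (fun _ => s *: V), (fun _ => s *: W) => X.
rewrite big_ord1 !adjmxZ -!scalemxAl -!scalemxAr !scalerA -scalerDr.
rewrite -[_ + _]/(psi V W X) h scalerA hs mulVf ?scale1r //.
by rewrite gt_eqF.
Qed.

End Part2.

Lemma ip_0r N (w : 'cV[C]_N) : ip w 0 = 0.
Proof. by rewrite /ip big1 // => k _; rewrite mxE mulr0. Qed.

Lemma nonunit_ker N (A : 'M[C]_N) : A \notin unitmx -> exists z : 'cV[C]_N, A *m z = 0 /\ z != 0.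
Proof.
move=> hA; case: (Classical_Prop.classic (exists z : 'cV[C]_N, A *m z = 0 /\ z != 0)) => // hn.
case/negP: hA; apply: ker_unit => z hz.
case: (Classical_Prop.classic (z = 0)) => // nz; case: hn; exists z; split => //.
by apply/eqP.
Qed.

Section Final.
Variables n m : nat.
Variable phi : {linear 'M[C]_m -> 'M[C]_n}.
Hypothesis hpos : positive_map phi.

Lemma part2_fwd : dual_face_meets_int_T phi -> (exists X, phi X != 0) ->
  ~ decomposable phi.
Proof.
case=> A [hd [_ _ uA uT]] [X0 hX0] [k [V [W hphi]]].
have cA := meets_cone hpos hd; have gA := cone_gram cA; have gT := cone_gram_pt cA.
have hp : pairing A phi =
    \sum_(i < k) (qf A (vecV (V i)) + qf (ptrans A) (vecV (W i))).
  rewrite (pairing_ext _ (g := fun X => \sum_(i < k) psi (V i) (W i) X)); last first.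
    by move=> X; rewrite hphi.
  by rewrite pairing_sumf; apply: eq_bigr => i _; apply: pairing_psi.
have hz : pairing A phi = 0 by case: hd.
have hge : forall i : 'I_k, xpredT i -> 0 <= qf A (vecV (V i)) + qf (ptrans A) (vecV (W i)).
  by move=> i _; apply: addr_ge0; [apply: (gram_psd gA) | apply: (gram_psd gT)].
have h0 : forall i, V i = 0 /\ W i = 0.
  move=> i; have := psumr_eq0P hge (etrans (esym hp) hz) (isT : xpredT i).
  move/eqP; rewrite paddr_eq0 ?(gram_psd gA) ?(gram_psd gT) // => /andP[/eqP e1 /eqP e2].
  split; apply: vecV_inj.
    by apply: (unit_ker uA); apply: (gram_ker gA).
  by apply: (unit_ker uT); apply: (gram_ker gT).
case/eqP: hX0; rewrite hphi big1 // => i _.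
by case: (h0 i) => -> ->; rewrite !mulmx0 addr0.
Qed.

Lemma exp_dec V W : exposed phi ->
  (forall A, dual_face phi A -> pairing A (psi V W) = 0) -> ~ (V = 0 /\ W = 0) ->
  decomposable phi.
Proof.
move=> hexp hA hVW.
have [lam [hl hlam]] := (hexp (psi V W) (psi_pos V W)).2 hA.
case: (eqVneq lam 0) => [l0|ln0].
  case: hVW; apply: psi1; rewrite hlam l0 scale0r //.
apply: (dec_from _ hlam).
by rewrite lt_def ln0 hl.
Qed.

Lemma part2_bwd : exposed phi -> ~ decomposable phi -> dual_face_meets_int_T phi.
Proof.
move=> hexp hnd; case: (Classical_Prop.classic (dual_face_meets_int_T phi)) => // hn.
exfalso; have [A [cA [h1 h2]]] := max_cone phi.
case uA: (A \in unitmx); last first.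
  have [z [hz nz]] := nonunit_ker (negbT uA).
  apply: hnd; apply: (@exp_dec (matV z) 0) => //.
    move=> A' hd; apply: cone_pairing0 (meets_cone hpos hd) => y x hyx.
    rewrite psi_rk1 vecV_matV vecV0 ip_0r (h1 z hz) ?mulr0 ?addr0 //.
    by exists y, x.
  case=> hV _; case/eqP: nz; by rewrite -(vecV_matV z) hV vecV0.
case uT: (ptrans A \in unitmx); last first.
  have [z [hz nz]] := nonunit_ker (negbT uT).
  apply: hnd; apply: (@exp_dec 0 (matV z)) => //.
    move=> A' hd; apply: cone_pairing0 (meets_cone hpos hd) => y x hyx.
    rewrite psi_rk1 vecV_matV vecV0 ip_0r (h2 z hz) ?mulr0 ?addr0 //.
    by exists y, x.
  case=> _ hW; case/eqP: nz; by rewrite -(vecV_matV z) hW vecV0.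
by apply: hn; apply: cone_meets cA uA uT.
Qed.

End Final.

End S.

Theorem proposition3p1 (C : numClosedFieldType) (m n : nat)
    (hm : (0 < m)%N) (hn : (0 < n)%N)
    (phi : {linear 'M[C]_m -> 'M[C]_n}) (hpos : positive_map phi) :
  (dual_face_meets_int_T phi <-> spans_all (Pvecs phi) /\ spans_all (Pvecs_pconj phi)) /\
  ((exists X : 'M[C]_m, phi X != 0) -> exposed phi ->
     (dual_face_meets_int_T phi <-> ~ decomposable phi)).
Proof.
split; first exact: part1 hpos.
move=> hX hexp; split.
  by move=> hM; apply: part2_fwd.
exact: part2_bwd.
Qed.
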